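(* Let $P=\{p_1<\dots<p_n\}\subset\mathbb{R}$ and let $S'$ be a finite set of intervals of $\mathbb{R}$, all of the same length and with no endpoint in $P$. If every point of $P$ lies in some interval of $S'$ and for every $1\le i<n$ the points $p_i,p_{i+1}$ have different codes $\{s\in S':p\in s\}$, then all points of $P$ have pairwise different codes with respect to $S'$ (so $S'$ is a discriminating code of $P$).
   Context: The code of a point $p$ with respect to a set $S'$ of intervals is $\{s\in S': p\in s\}$. A discriminating code of $P$ is a set of objects such that every point of $P$ has a nonempty code and distinct points have distinct codes. *)

(* Defs.v *)
From HB Require Import structures.
From mathcomp Require Import all_boot all_order all_algebra.
From mathcomp Require Import reals.
Set Implicit Arguments. Unset Strict Implicit. Unset Printing Implicit Defensive.
Import Order.TTheory GRing.Theory Num.Theory.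
Local Open Scope ring_scope.

(* A finite family S' of intervals of common length L is given by an index
   finType I and left endpoints a : I -> R; interval i is the closed interval
   [a i, a i + L].  (Open/closed is irrelevant: no endpoint lies in P.) *)
Definition interval_of (R : realType) (L : R) (a : R) : interval R :=
  `[a, a + L]%R.

Definition code (R : realType) (I : finType) (a : I -> R) (L : R) (x : R)
  : {set I} := [set i | x \in interval_of L (a i)].

(* Main.v *)
Require Import Defs.
From HB Require Import structures.
From mathcomp Require Import all_boot all_order all_algebra.
From mathcomp Require Import reals.
Import Order.TTheory GRing.Theory Num.Theory.
Local Open Scope ring_scope.

Lemma memc (R : realType) (I : finType) (a : I -> R) (L x : R) i :
  (i \in code a L x) = (a i <= x <= a i + L).
Proof. by rewrite inE /interval_of in_itv. Qed.

Theorem mainTheorem8 (R : realType) (n : nat) (p : 'I_n -> R)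
  (I : finType) (a : I -> R) (L : R) :
  (* P = {p_1 < ... < p_n} *)
  (forall i j : 'I_n, (i < j)%N -> p i < p j) ->
  (* all intervals have the same length L *)
  0 <= L ->
  (* no endpoint of an interval lies in P *)
  (forall (s : I) (k : 'I_n), p k != a s /\ p k != a s + L) ->
  (* every point of P lies in some interval of S' *)
  (forall k : 'I_n, code a L (p k) != set0) ->
  (* consecutive points have different codes *)
  (forall (k : 'I_n) (Hk : (k.+1 < n)%N),
      code a L (p k) != code a L (p (Ordinal Hk))) ->
  (* then all points have pairwise different codes *)
  forall k l : 'I_n, k != l -> code a L (p k) != code a L (p l).
Proof.
move=> Hinc HL _ Hne Hcons.
suff W : forall k l : 'I_n, (k < l)%N -> code a L (p k) != code a L (p l).
  move=> k l kl; case: (ltngtP k l) => h; first exact: W.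
    by rewrite eq_sym; apply: W.
  by move/val_inj: h => h; rewrite h eqxx in kl.
move=> k l kl; apply/negP => /eqP Ekl.
have Hm : (k.+1 < n)%N by apply: leq_ltn_trans (ltn_ord l).
have := Hcons k Hm; set m := Ordinal Hm => Hkm.
have [eml|nml] := eqVneq (nat_of_ord m) (nat_of_ord l).
  by move/val_inj: eml Hkm => ->; rewrite Ekl eqxx.
have ml : (m < l)%N by rewrite ltn_neqAle nml.
have km : (k < m)%N by rewrite /= ltnSn.
have pkm := Hinc _ _ km; have pml := Hinc _ _ ml.
have [t] := set0Pn _ (Hne k); rewrite eq_sym in Hkm.
move=> tk; have tl : t \in code a L (p l) by rewrite -Ekl.
move: tk tl; rewrite !memc => /andP[t1 t2] /andP[t3 t4].
case/negP: Hkm; rewrite eqEsubset; apply/andP; split; apply/subsetP => s.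
  rewrite !memc => /andP[s1 s2].
  apply/negPn/negP; rewrite negb_and -!ltNge => /orP[h|h].
  - have s3 : ~~ (s \in code a L (p l)) by rewrite -Ekl memc (negbTE (_ : ~~ (a s <= p k))) // -ltNge.
    move: s3; rewrite memc negb_and -!ltNge => /orP[h2|h2].
      by move: (lt_le_trans h2 s1); rewrite ltNge (ltW pml).
    have : a s < a t by rewrite -(ltrD2r L); apply: (lt_le_trans h2 t4).
    by rewrite ltNge (ltW (le_lt_trans t1 h)).
  - by move: (lt_trans h pkm); rewrite ltNge s2.
rewrite !memc => /andP[s1 s2]; apply/andP; split.
  by apply: le_trans (ltW pkm).
have : s \in code a L (p l) by rewrite -Ekl memc s1 s2.
by rewrite memc => /andP[_ ]; apply: le_trans (ltW pml).
Qed.
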